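(* For every integer $n\ge 0$, \[ p_n(x) = 2^n\sum_{k=0}^n\binom{n+1}{k} F_{n-k}(x,1/2)\,F_k(x,1/2). \]
   Context: Define polynomial sequences $(p_k(x))_{k\ge -1}$ and $(q_k(x))_{k\ge -1}$ by $p_{-1}(x)=0$, $q_{-1}(x)=1$ and, for $k\ge -1$, $p_{k+1}(x) = 2(kx+1)p_k(x) + 2x(1-x)p_k'(x) + q_k(x)$, $q_{k+1}(x) = (2(k+1)x+1)q_k(x) + 2x(1-x)q_k'(x)$. For a permutation $\pi=\pi_1\cdots\pi_n$ of $[n]=\{1,\dots,n\}$, let $\mathrm{exc}(\pi)=|\{i\in[n]:\pi_i>i\}|$ and $\mathrm{cyc}(\pi)$ the number of cycles in its disjoint cycle decomposition. The bivariate Eulerian polynomials are $F_0(x,y)=1$ and $F_n(x,y)=\sum_{\pi\in\mathfrak S_n} x^{\mathrm{exc}(\pi)}y^{\mathrm{cyc}(\pi)}$ for $n>0$, where $\mathfrak S_n$ is the symmetric group on $[n]$; their exponential generating function is $\sum_{n\ge0}F_n(x,y)t^n/n! = \left(\frac{1-x}{e^{t(x-1)}-x}\right)^y$. *)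

(* Defs.v *)
From HB Require Import structures.
From mathcomp Require Import all_boot all_order all_algebra all_fingroup.
Set Implicit Arguments. Unset Strict Implicit. Unset Printing Implicit Defensive.
Import GRing.Theory.
Local Open Scope ring_scope.

(* Index shift: pq m = (p_{m-1}, q_{m-1}), so pq 0 = (p_{-1}, q_{-1}) = (0, 1). *)
Fixpoint pq (m : nat) : {poly rat} * {poly rat} :=
  match m with
  | 0 => (0, 1)
  | m'.+1 =>
      let: (p, q) := pq m' in
      let k : rat := (m'%:Z - 1)%:~R in
      (2%:R * (k *: 'X + 1) * p + 2%:R * 'X * (1 - 'X) * p^`() + q,
       (2%:R * (m'%:R *: 'X) + 1) * q + 2%:R * 'X * (1 - 'X) * q^`())
  end.

Definition p_shift (m : nat) : {poly rat} := (pq m).1.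
Definition q_shift (m : nat) : {poly rat} := (pq m).2.

(* excedances of a permutation of [n] (0-based: s i > i iff pi_{i+1} > i+1) *)
Definition exc n (s : {perm 'I_n}) : nat := #|[set i : 'I_n | (i < s i)%N]|.
(* number of cycles in the disjoint cycle decomposition (fixed points included) *)
Definition cyc n (s : {perm 'I_n}) : nat := #|porbits s|.

Definition F (n : nat) (y : rat) : {poly rat} :=
  if n is 0 then 1
  else \sum_(s : {perm 'I_n}) (y ^+ cyc s) *: 'X^(exc s).

(* Main.v *)
Require Import Defs.
From HB Require Import structures.
From mathcomp Require Import all_boot all_order all_algebra all_fingroup.
From mathcomp Require Import zify ring.
Set Implicit Arguments. Unset Strict Implicit. Unset Printing Implicit Defensive.
Import GRing.Theory.
Local Open Scope ring_scope.

Lemma porbits1 (T : finType) : #|porbits (1 : {perm T})| = #|T|.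
Proof.
rewrite card_imset // => x y; move/eqP; rewrite eq_porbit_mem.
by rewrite porbit.unlock cycle1 imset_set1 /aperm perm1 inE => /eqP.
Qed.

Section Comb.
Variable n : nat.

Definition Gp (j : 'I_n.+1) (t : 'S_n) : 'S_n.+1 :=
  (tperm j ord_max * lift_perm ord_max ord_max t)%g.

Lemma Gp_j j t : Gp j t j = ord_max.
Proof. by rewrite /Gp permM tpermL lift_perm_id. Qed.

Lemma Gp_lift j t k : Gp j t (lift ord_max k) =
  if lift ord_max k == j then ord_max else lift ord_max (t k).
Proof.
rewrite /Gp permM; case: eqP => [->|/eqP ne]; first by rewrite tpermL lift_perm_id.
rewrite tpermD ?lift_perm_lift //; first by rewrite eq_sym.
exact: neq_lift.
Qed.

Lemma Gp_inj : injective (fun p : 'I_n.+1 * 'S_n => Gp p.1 p.2).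
Proof.
move=> [j1 t1] [j2 t2] /= E.
have ej : j1 = j2.
  by apply: (@perm_inj _ (Gp j1 t1)); rewrite Gp_j E Gp_j.
subst j2; congr pair; move: E; rewrite /Gp => /mulgI E.
apply/permP => k; apply: (@lift_inj _ ord_max).
by rewrite -!(lift_perm_lift ord_max ord_max) E.
Qed.

Lemma Gp_bij : bijective (fun p : 'I_n.+1 * 'S_n => Gp p.1 p.2).
Proof.
apply: inj_card_bij; first exact: Gp_inj.
by rewrite card_prod !card_Sn card_ord factS.
Qed.

Lemma sum_Sn (R : nmodType) (f : 'S_n.+1 -> R) :
  \sum_(s : 'S_n.+1) f s = \sum_(j : 'I_n.+1) \sum_(t : 'S_n) f (Gp j t).
Proof.
rewrite (reindex _ (onW_bij _ Gp_bij)) /= pair_big /=.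
by apply: eq_bigr => -[j t].
Qed.

End Comb.

Section Cyc.
Variable n : nat.
Local Notation L := (lift_perm (@ord_max n) (@ord_max n)).

Lemma lift_permX t i : (L t ^+ i)%g = L (t ^+ i)%g.
Proof.
elim: i => [|i IH]; first by rewrite !expg0 lift_perm1.
by rewrite !expgS IH lift_permM.
Qed.

Lemma porbit_lift t a b :
  (lift ord_max a \in porbit (L t) (lift ord_max b)) = (a \in porbit t b).
Proof.
apply/porbitP/porbitP => -[i E]; exists i.
  by apply: (@lift_inj _ ord_max); rewrite E lift_permX lift_perm_lift.
by rewrite E lift_permX lift_perm_lift.
Qed.

Lemma lift_tperm a b : L (tperm a b) = tperm (lift ord_max a) (lift ord_max b).
Proof.
apply/permP=> k; case: (unliftP ord_max k) => [k'|] ->.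
  by rewrite lift_perm_lift inj_tperm //; apply: lift_inj.
by rewrite lift_perm_id tpermD // eq_sym neq_lift.
Qed.

Lemma cyc_lift t : cyc (L t) = (cyc t).+1.
Proof.
case: (prod_tpermP t) => ts -> _; elim: ts => [|[a b] ts IH].
  by rewrite !big_nil lift_perm1 /cyc !porbits1 !card_ord.
rewrite !big_cons /=; set u := (\prod_(_ <- _) _)%g in IH *.
rewrite -(lift_permM ord_max ord_max ord_max) lift_tperm.
have H1 := porbits_mul_tperm u a b.
have H2 := porbits_mul_tperm (L u) (lift ord_max a) (lift ord_max b).
rewrite porbit_lift (inj_eq (@lift_inj _ ord_max)) in H2.
move: H1 H2; rewrite /cyc in IH *; rewrite IH.
case: (a \in porbit u b); case: (a != b) => /=;
  move: (#|porbits (tperm _ _ * L u)|) (#|porbits (tperm a b * u)|) (#|porbits u|) => x y z; rewrite ?double0 ?addn0 ?addn1 ?addn2; lia.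
Qed.

Lemma cyc_Gp (j : 'I_n.+1) (t : 'S_n) : cyc (Gp j t) = (cyc t + (j == ord_max))%N.
Proof.
have := porbits_mul_tperm (L t) j ord_max.
have -> : (j \in porbit (L t) ord_max) = (j == ord_max).
  apply/porbitP/eqP => [[i ->]|->]; last by exists 0; rewrite expg0 perm1.
  by rewrite permX_fix // lift_perm_id.
rewrite /cyc -/(@cyc n.+1 (L t)) cyc_lift /Gp /cyc.
move: (#|porbits (tperm j ord_max * L t)|) (#|porbits t|) => x y.
case: eqP => _ /=; rewrite ?double0 ?addn0 ?addn1; lia.
Qed.

End Cyc.

Lemma excE m (s : 'S_m) : exc s = (\sum_(i : 'I_m) (i < s i)%N)%N.
Proof.
rewrite /exc -sum1_card big_mkcond /=; apply: eq_bigr => i _.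
by rewrite inE; case: (_ < _)%N.
Qed.

Lemma exc_Gp n (j : 'I_n.+1) (t : 'S_n) :
  exc (Gp j t) = (\sum_(k : 'I_n) (if lift ord_max k == j then 1 else (k < t k)%N))%N.
Proof.
rewrite excE big_ord_recr /=.
have -> : (n < Gp j t ord_max)%N = false by rewrite ltnNge -ltnS ltn_ord.
rewrite addn0; apply: eq_bigr => k _.
have -> : widen_ord (leqnSn n) k = lift ord_max k.
  by apply: val_inj; rewrite /= /bump leqNgt ltn_ord.
rewrite Gp_lift; case: eqP => _ /=; first by rewrite (ltn_ord k).
by rewrite /bump (_ : (n <= t k)%N = false) // leqNgt ltn_ord.
Qed.


Definition Fs n (y : rat) : {poly rat} :=
  \sum_(s : 'S_n) (y ^+ cyc s) *: 'X^(exc s).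

Lemma widen_lift n (k : 'I_n) : widen_ord (leqnSn n) k = lift ord_max k.
Proof. by apply: val_inj; rewrite /= /bump leqNgt ltn_ord. Qed.

Lemma inner n (b : 'I_n -> bool) (e : nat) : e = (\sum_k b k)%N ->
  \sum_(k0 : 'I_n) 'X^(\sum_(k : 'I_n) (if k == k0 then 1 else b k))%N
  = e%:R *: 'X^e + (n - e)%:R *: 'X^(e.+1) :> {poly rat}.
Proof.
move=> ->; set e0 := (\sum_k b k)%N.
have E k0 : (\sum_(k : 'I_n) (if k == k0 then 1 else b k))%N = if b k0 then e0 else e0.+1.
  rewrite /e0 (bigD1 k0) //= eqxx [in RHS](bigD1 k0) //=.
  rewrite (eq_bigr (fun k => b k : nat)); last by move=> k /negbTE ->.
  by case: (b k0).
have S : (e0 + \sum_(k : 'I_n) ~~ b k)%N = n.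
  rewrite /e0 -big_split /= (eq_bigr (fun _ => 1%N)) ?sum1_card ?card_ord //.
  by move=> k _; case: (b k).
rewrite (eq_bigr (fun k0 => (b k0)%:R *: 'X^e0 + (~~ b k0)%:R *: 'X^(e0.+1))); last first.
  by move=> k0 _; rewrite E; case: (b k0); rewrite ?scale1r ?scale0r ?addr0 ?add0r.
have S' : (\sum_(k : 'I_n) ~~ b k)%N = (n - e0)%N by rewrite -[in RHS]S addKn.
by rewrite big_split /= -!scaler_suml -!natr_sum S'.
Qed.

Lemma exc_le n (t : 'S_n) : (exc t <= n)%N.
Proof. by rewrite /exc; apply: leq_trans (max_card _) _; rewrite card_ord. Qed.

Lemma Fs_rec n y :
  Fs n.+1 y = (y%:P + n%:R *: 'X) * Fs n y + 'X * (1 - 'X) * (Fs n y)^`().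
Proof.
rewrite /Fs sum_Sn big_ord_recr /=.
rewrite (eq_bigr (fun k0 => \sum_(t : 'S_n) (y ^+ cyc t) *:
   'X^(\sum_(k : 'I_n) (if k == k0 then 1 else (k < t k)))%N)); last first.
  move=> k0 _; apply: eq_bigr => t _.
  rewrite widen_lift cyc_Gp exc_Gp eq_sym (negbTE (neq_lift _ _)) addn0.
  by congr (_ *: 'X^_); apply: eq_bigr => k _; rewrite (inj_eq (@lift_inj _ ord_max)).
rewrite exchange_big /= -big_split /=.
rewrite linear_sum /= mulr_sumr mulr_sumr -big_split /=.
apply: eq_bigr => t _.
rewrite -scaler_sumr (inner (excE t)) cyc_Gp eqxx exc_Gp.
rewrite (eq_bigr (fun k : 'I_n => (k < t k)%N : nat)); last first.
  by move=> k _; rewrite eq_sym (negbTE (neq_lift _ _)).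
rewrite -excE derivZ -!scalerAr exprD expr1 -scalerA -!scalerDr; congr (_ *: _).
rewrite derivXn natrB ?exc_le // -!mul_polyC !polyCB.
case: (exc t) => [|e]; rewrite /= ?exprS; ring.
Qed.

Lemma F_Fs n y : F n y = Fs n y.
Proof.
case: n => [|n] //; rewrite /Fs (big_pred1 1%g) => [|s]; last by rewrite /= permS0 eqxx.
have -> : cyc (1%g : 'S_0) = 0%N.
  by apply/eqP; rewrite -leqn0 /cyc; apply: leq_trans (leq_imset_card _ _) _; rewrite card_ord.
have -> : exc (1%g : 'S_0) = 0%N.
  by apply/eqP; rewrite -leqn0; apply: exc_le.
by rewrite expr0 scale1r expr0.
Qed.

Lemma F_rec n y :
  F n.+1 y = (y%:P + n%:R *: 'X) * F n y + 'X * (1 - 'X) * (F n y)^`().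
Proof. by rewrite !F_Fs Fs_rec. Qed.

Definition H m : {poly rat} := (2%:R ^+ m) *: F m (1 / 2%:R).

Lemma H0 : H 0 = 1.
Proof. by rewrite /H /= expr0 scale1r. Qed.

Lemma H_rec m :
  H m.+1 = (1 + (2 * m)%:R *: 'X) * H m + 2%:R * 'X * (1 - 'X) * (H m)^`().
Proof.
rewrite /H F_rec exprSr -scalerA derivZ -!scalerAr -scalerDr; congr (_ *: _).
set G := F m _.
rewrite -!mul_polyC !polyC_natr natrM.
set h := (1 / 2%:R)%:P.
have e : 2%:R * h = 1 :> {poly rat}.
  by rewrite /h -polyC_natr -polyCM (_ : 2%:R * (1 / 2%:R) = 1 :> rat) //; field.
transitivity ((2%:R * h) * G + 2%:R * m%:R * 'X * G + 2%:R * 'X * (1 - 'X) * G^`()); first ring.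
rewrite e; ring.
Qed.

Definition P n : {poly rat} :=
  \sum_(k < n.+1) ('C(n.+1, k))%:R * (H (n - k) * H k).

Lemma term_rec n k (c : nat) : (k <= n)%N ->
  2%:R * (n%:R *: 'X + 1) * (c%:R * (H (n - k) * H k))
  + 2%:R * 'X * (1 - 'X) * (c%:R * (H (n - k) * H k))^`()
  = c%:R * (H (n - k).+1 * H k + H (n - k) * H k.+1).
Proof.
move=> le_kn.
rewrite !H_rec derivM -polyC_natr derivC mul0r add0r derivM polyC_natr.
have hn : n%:R = (n - k)%:R + k%:R :> {poly rat} by rewrite -natrD subnK.
rewrite -!mul_polyC !polyC_natr !natrM hn.
ring.
Qed.

Lemma sum_shift n :
  \sum_(k < n.+1) ('C(n.+1, k))%:R * (H (n - k).+1 * H k)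
  = \sum_(i < n.+1) ('C(n.+1, i.+1))%:R * (H (n - i) * H i.+1).
Proof.
rewrite big_ord_recl big_ord_recr /= subn0 bin0 binn H0 mul1r mulr1 subnn.
rewrite H0 mul1r mul1r addrC; congr (_ + _).
apply: eq_bigr => i _; rewrite /bump /= add1n.
by rewrite subnSK.
Qed.

Lemma P_rec n : P n.+1 =
  2%:R * (n%:R *: 'X + 1) * P n + 2%:R * 'X * (1 - 'X) * (P n)^`() + H n.+1.
Proof.
rewrite /P linear_sum /= !mulr_sumr -big_split /=.
rewrite (eq_bigr (fun k : 'I_n.+1 => ('C(n.+1,k))%:R * (H (n - k).+1 * H k)
   + ('C(n.+1,k))%:R * (H (n - k) * H k.+1))); last first.
  by move=> k _; rewrite term_rec ?mulrDr // -ltnS.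
rewrite big_split /= sum_shift.
rewrite big_ord_recl subn0 bin0 H0 mulr1 mul1r.
rewrite (eq_bigr (fun i : 'I_n.+1 => ('C(n.+1, i.+1))%:R * (H (n - i) * H i.+1)
   + ('C(n.+1, i))%:R * (H (n - i) * H i.+1))); last first.
  by move=> i _; rewrite lift0 binS natrD mulrDl subSS.
rewrite big_split /=; ring.
Qed.

Lemma pqS n : pq n.+1 =
  let: (p, q) := pq n in
  let k : rat := (n%:Z - 1)%:~R in
  (2%:R * (k *: 'X + 1) * p + 2%:R * 'X * (1 - 'X) * p^`() + q,
   (2%:R * (n%:R *: 'X) + 1) * q + 2%:R * 'X * (1 - 'X) * q^`()).
Proof. by []. Qed.

Lemma pq_eq n : pq n.+1 = (P n, H n.+1).
Proof.
elim: n => [|n IH].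
  rewrite pqS /= !mulr0 deriv0 mulr0 !add0r H_rec H0 /P big_ord1 /= H0 !mul1r.
  by rewrite scale0r mulr0 add0r addr0.
rewrite pqS IH /=; congr pair.
  rewrite P_rec; have -> : ((n.+1)%:Z - 1)%:~R = n%:R :> rat.
    by rewrite -[n.+1]addn1 PoszD addrK.
  by [].
rewrite [in RHS]H_rec -!mul_polyC !polyC_natr natrM.
ring.
Qed.

Theorem theorem3p7 (n : nat) :
  p_shift n.+1 =
  2%:R ^+ n * \sum_(0 <= k < n.+1)
     ('C(n.+1, k))%:R * (F (n - k) (1 / 2%:R) * F k (1 / 2%:R)).
Proof.
rewrite /p_shift pq_eq /= /P big_mkord mulr_sumr; apply: eq_bigr => k _.
rewrite /H -!mul_polyC !rmorphXn /= !polyC_natr.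
have -> : (2%:R : {poly rat}) ^+ n = 2%:R ^+ (n - k) * 2%:R ^+ k.
  by rewrite -exprD subnK // -ltnS.
ring.
Qed.
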